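(* If $E$ is an order continuous quasi-normed symmetric space on $I$ (with $E\subseteq c_0$ if $I=\mathbb N$), then $E\in(HC)$.
   Context: $I$ is either $[0,\alpha)$, $0<\alpha\le\infty$, with Lebesgue measure $m$, or $\mathbb N$ with counting measure $m$; $L_0(I)$ denotes complex measurable functions (resp. sequences) on $I$, and $\mu(t,f)=\inf\{s\ge0: m\{|f|>s\}\le t\}$ is the decreasing rearrangement. A quasi-normed symmetric space on $I$ is a quasi-normed space $E\subseteq L_0(I)$ such that $f\in L_0(I)$, $g\in E$, $\mu(f)\le\mu(g)$ imply $f\in E$ and $\|f\|_E\le\|g\|_E$; standing assumption: $E^*$ separates points of $E$. $E$ is order continuous if for every $f\in E$ and every sequence $0\le f_n\le |f|$ with $f_n\downarrow0$ a.e., $\|f_n\|_E\downarrow0$. The envelope norm is $\|f\|_{\widehat E}=\inf\{\sum_{i=1}^n\|f_i\|_E: f=\sum_{i=1}^nf_i,\ f_i\in E\}$. Convergence in measure: $m\{|f_n-f|>\varepsilon\}\to0$ for every $\varepsilon>0$. $E\in(HC)$ means: every sequence $(f_n)\subseteq E$ Cauchy in $\|\cdot\|_{\widehat E}$ and converging to $0$ in measure satisfies $\|f_n\|_{\widehat E}\to0$. *)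

(* Defs.v *)
From HB Require Import structures.
From mathcomp Require Import all_boot all_order all_algebra.
From mathcomp Require Import all_classical all_reals all_analysis.
From mathcomp Require Import complex.
Import Order.TTheory GRing.Theory Num.Theory.

Set Implicit Arguments.
Unset Strict Implicit.
Unset Printing Implicit Defensive.

Local Open Scope classical_set_scope.
Local Open Scope ring_scope.

Definition cabs (R : rcfType) (z : R[i]) : R := Num.sqrt (complex.Re z ^+ 2 + complex.Im z ^+ 2).

Section Defs.
Context {d : measure_display} {T : measurableType d} {R : realType}.
Variables (mu : set T -> \bar R) (D : set T).
(* The space I is modelled as the subset D of T, carrying the measure mu;
   functions on I are functions T -> C vanishing outside D. *)

Definition aeD (P : T -> Prop) : Prop :=
  exists N, [/\ measurable N, mu N = 0%E & forall x, D x -> ~ N x -> P x].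

Definition L0 (f : T -> R[i]) : Prop :=
  [/\ measurable_fun D (fun x => complex.Re (f x)),
      measurable_fun D (fun x => complex.Im (f x)) &
      forall x, ~ D x -> f x = 0].

Definition distf (f : T -> R[i]) (s : R) : \bar R :=
  mu [set x | D x /\ s < cabs (f x)].

Definition rearr (f : T -> R[i]) (t : R) : \bar R :=
  ereal_inf [set s%:E | s in [set s : R | 0 <= s /\ (distf f s <= t%:E)%E]].

Definition rearr_le (f g : T -> R[i]) : Prop :=
  forall t : R, 0 <= t -> (rearr f t <= rearr g t)%E.

Definition scalef (c : R[i]) (f : T -> R[i]) : T -> R[i] := fun x => c * f x.
Definition addf (f g : T -> R[i]) : T -> R[i] := fun x => f x + g x.
Definition subf (f g : T -> R[i]) : T -> R[i] := fun x => f x - g x.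

Variables (E : set (T -> R[i])) (qn : (T -> R[i]) -> R).

(* E is a (complex) linear subspace of L_0 and qn is a quasi-norm on it
   (functions equal a.e. are identified: qn f = 0 iff f = 0 a.e.) *)
Definition is_quasinormed : Prop :=
  [/\ (forall f, E f -> L0 f),
      E (fun=> 0) /\ (forall f g, E f -> E g -> E (addf f g))
        /\ (forall c f, E f -> E (scalef c f)),
      (forall f, E f -> 0 <= qn f /\ (qn f = 0 <-> aeD (fun x => f x = 0))),
      (forall c f, E f -> qn (scalef c f) = cabs c * qn f) &
      (exists K : R, 1 <= K /\
         forall f g, E f -> E g -> qn (addf f g) <= K * (qn f + qn g))].

Definition is_symmetric : Prop :=
  forall f g, L0 f -> E g -> rearr_le f g -> E f /\ qn f <= qn g.

Definition cont_lin_functional (phi : (T -> R[i]) -> R[i]) : Prop :=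
  [/\ (forall f g, E f -> E g -> phi (addf f g) = phi f + phi g),
      (forall c f, E f -> phi (scalef c f) = c * phi f) &
      (forall f, E f -> forall eps : R, 0 < eps ->
         exists2 delta : R, 0 < delta &
           forall g, E g -> qn (subf g f) < delta -> cabs (phi g - phi f) < eps)].

Definition dual_separates : Prop :=
  forall f, E f -> ~ aeD (fun x => f x = 0) ->
    exists phi, cont_lin_functional phi /\ phi f <> 0.

Definition is_qsym_space : Prop :=
  [/\ is_quasinormed, is_symmetric & dual_separates].

Definition order_continuous : Prop :=
  forall f, E f -> forall F : nat -> T -> R[i],
    (forall n, L0 (F n)) ->
    (forall n, aeD (fun x => complex.Im (F n x) = 0 /\ 0 <= complex.Re (F n x)
                             /\ complex.Re (F n x) <= cabs (f x))) ->
    aeD (fun x => (forall n, complex.Re (F n.+1 x) <= complex.Re (F n x)) /\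
                  (fun n => complex.Re (F n x)) @ \oo --> 0%R) ->
    (forall n, qn (F n.+1) <= qn (F n)) /\ (fun n => qn (F n)) @ \oo --> 0%R.

Definition env_norm (f : T -> R[i]) : R :=
  inf [set r : R | exists n (fs : 'I_n -> T -> R[i]),
         [/\ forall i, E (fs i),
             f = (fun x => \sum_(i < n) fs i x) &
             r = \sum_(i < n) qn (fs i)]].

Definition cvg_in_measure (F : nat -> T -> R[i]) (f : T -> R[i]) : Prop :=
  forall eps : R, 0 < eps ->
    (fun n => mu [set x | D x /\ eps < cabs (F n x - f x)]) @ \oo --> 0%E.

Definition HC : Prop :=
  forall F : nat -> T -> R[i], (forall n, E (F n)) ->
    (forall eps : R, 0 < eps -> exists N : nat, forall n m, (N <= n)%N -> (N <= m)%N ->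
        env_norm (subf (F n) (F m)) < eps) ->
    cvg_in_measure F (fun=> 0) ->
    (fun n => env_norm (F n)) @ \oo --> 0%R.

End Defs.

Definition Ico0 (R : realType) (alpha : \bar R) : set R :=
  [set x : R | 0 <= x /\ (x%:E < alpha)%E].

(* Main.v *)
Require Import Defs.
From HB Require Import structures.
From mathcomp Require Import all_boot all_order all_algebra.
From mathcomp Require Import all_classical all_reals all_analysis.
From mathcomp Require Import complex.
From mathcomp Require Import measurable_realfun.
From mathcomp Require Import ring lra.
Import Order.TTheory GRing.Theory Num.Theory.
Local Open Scope classical_set_scope.
Local Open Scope ring_scope.

Section Cabs.
Context {R : rcfType}.

Lemma cabs_normc (z : R[i]) : cabs z = Normc.normc z.
Proof. by case: z. Qed.

Lemma cabs_ge0 (z : R[i]) : 0 <= cabs z.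
Proof. exact: sqrtr_ge0. Qed.

Lemma cabsM (x y : R[i]) : cabs (x * y) = cabs x * cabs y.
Proof.
have := normCM x y; rewrite !cabs_normc.
set a := Normc.normc _; set b := Normc.normc _; set c := Normc.normc _.
Local Open Scope complex_scope.
move=> h; have := congr1 (@complex.Re R) h.
by rewrite /= mulr0 subr0.
Qed.
Local Close Scope complex_scope.

Lemma cabs_real (x : R) : cabs (real_complex R x) = `|x|.
Proof. by rewrite /cabs /= expr0n /= addr0 sqrtr_sqr. Qed.

Lemma cabs0 : cabs (0 : R[i]) = 0.
Proof. by rewrite /cabs /= expr0n /= addr0 sqrtr0. Qed.

End Cabs.
Section Generic.
Context {d : measure_display} {T : measurableType d} {R : realType}.
Variables (mu : {measure set T -> \bar R}) (D : set T).
Hypothesis mD : measurable D.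
Variables (E : set (T -> R[i])) (qn : (T -> R[i]) -> R).

Lemma meas_cabs (f : T -> R[i]) : L0 D f -> measurable_fun D (fun x => cabs (f x)).
Proof.
case=> mre mim _.
rewrite (_ : (fun x => cabs (f x)) = Num.sqrt \o (fun x => complex.Re (f x) ^+ 2 + complex.Im (f x) ^+ 2)) //.
apply: measurableT_comp; first exact: continuous_measurable_fun (@sqrt_continuous R).
apply: measurable_funD; exact: measurable_funX.
Qed.

Lemma mset_gt (f : T -> R[i]) s : L0 D f -> measurable [set x | D x /\ s < cabs (f x)].
Proof.
move=> /meas_cabs mf.
have := mf mD _ (measurable_itv `]s, +oo[).
congr measurable; apply/seteqP; split => x /=; rewrite in_itv /= andbT; by [].
Qed.

Lemma mset_lt (f : T -> R[i]) s : L0 D f -> measurable [set x | D x /\ cabs (f x) < s].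
Proof.
move=> /meas_cabs mf.
have := mf mD _ (measurable_itv `]-oo, s[).
congr measurable; apply/seteqP; split => x /=; rewrite in_itv /=; by [].
Qed.

Definition trunc (A : set T) (f : T -> R[i]) : T -> R[i] :=
  fun x => if x \in A then f x else 0.

Lemma L0_trunc {A} {f : T -> R[i]} : measurable A -> L0 D f -> L0 D (trunc A f).
Proof.
move=> mA [mre mim z].
split.
- rewrite (_ : (fun x => _) = (\1_A : T -> R) \* (fun x => complex.Re (f x))).
    by apply: measurable_funM => //; exact: measurable_indic.
  apply/funext => x; rewrite /trunc /= indicE; case: (x \in A).
    by rewrite mul1r.
  by rewrite mul0r.
- rewrite (_ : (fun x => _) = (\1_A : T -> R) \* (fun x => complex.Im (f x))).
    by apply: measurable_funM => //; exact: measurable_indic.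
  apply/funext => x; rewrite /trunc /= indicE; case: (x \in A).
    by rewrite mul1r.
  by rewrite mul0r.
- by move=> x Dx; rewrite /trunc z //; case: (x \in A).
Qed.


Hypothesis HQ : is_qsym_space mu D E qn.

Lemma EL0 {f} : E f -> L0 D f.
Proof. by case: HQ => [[HL0 _ _ _ _] _ _]; apply: HL0. Qed.

Lemma dom (f g : T -> R[i]) : L0 D f -> E g ->
  (forall x, D x -> cabs (f x) <= cabs (g x)) -> E f /\ qn f <= qn g.
Proof.
case: HQ => [_ Hsym _] Lf Eg H.
apply: Hsym => // t t0.
rewrite /rearr; apply: le_ereal_inf => _ [s [s0 hs] <-]; exists s => //.
split => //; apply: le_trans hs.
rewrite /distf; apply: le_measure; rewrite ?inE.
- exact: mset_gt.
- exact: mset_gt (EL0 Eg).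
- by move=> x [Dx h]; split => //; exact: lt_le_trans h (H x Dx).
Qed.


Lemma qn_ge0 {f} : E f -> 0 <= qn f.
Proof. by case: HQ => [[_ _ Hqn _ _] _ _] Ef; case: (Hqn f Ef). Qed.

Lemma trunc_dom {A f} : measurable A -> E f -> E (trunc A f) /\ qn (trunc A f) <= qn f.
Proof.
move=> mA Ef; apply: dom => //; first exact: L0_trunc mA (EL0 Ef).
by move=> x _; rewrite /trunc; case: (x \in A) => //; rewrite cabs0 cabs_ge0.
Qed.

Definition dec (f : T -> R[i]) (r : R) := exists n (fs : 'I_n -> T -> R[i]),
  [/\ forall i, E (fs i), f = (fun x => \sum_(i < n) fs i x) & \sum_(i < n) qn (fs i) <= r].

Lemma env_le f r : dec f r -> env_norm E qn f <= r.
Proof.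
move=> [n [fs [Efs ef hr]]].
apply: le_trans hr.
apply: ge_inf.
- exists 0 => _ [m [gs [Egs _ ->]]]; apply: sumr_ge0 => i _; exact: qn_ge0.
- by exists n, fs.
Qed.

Lemma dec_E h : E h -> dec h (qn h).
Proof.
move=> Eh; exists 1%N, (fun _ => h); split => //.
  by apply/funext => x; rewrite big_ord1.
by rewrite big_ord1.
Qed.

Lemma env_lt {f e} : E f -> env_norm E qn f < e -> exists2 r, r < e & dec f r.
Proof.
move=> Ef /inf_lt [].
- by exists (qn f), 1%N, (fun _ => f); split => //;
    [apply/funext => x; rewrite big_ord1| rewrite big_ord1].
- move=> _ [n [fs [Efs ef ->]]] he; exists (\sum_(i < n) qn (fs i)) => //.
  by exists n, fs.
Qed.

Lemma dec_add f g r s : dec f r -> dec g s -> dec (Defs.addf f g) (r + s).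
Proof.
move=> [n [fs [Efs ef hr]]] [m [gs [Egs eg hs]]].
pose hs' := fun i : 'I_(n + m) => match @fintype.split n m i with inl j => fs j | inr j => gs j end.
have hl j : hs' (lshift m j) = fs j by rewrite /hs' (unsplitK (inl j)).
have hrr j : hs' (rshift n j) = gs j by rewrite /hs' (unsplitK (inr j)).
exists (n + m)%N, hs'; split.
- by move=> i; rewrite /hs'; case: (@fintype.split n m i).
- apply/funext => x; rewrite big_split_ord /Defs.addf ef eg /=.
  by congr (_ + _); apply: eq_bigr => i _; rewrite ?hl ?hrr.
- rewrite big_split_ord; apply: lerD.
    by under eq_bigr do rewrite hl.
  by under eq_bigr do rewrite hrr.
Qed.

Lemma dec_trunc A f r : measurable A -> dec f r -> dec (trunc A f) r.
Proof.
move=> mA [n [fs [Efs ef hr]]].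
exists n, (fun i => trunc A (fs i)); split.
- by move=> i; case: (trunc_dom mA (Efs i)).
- apply/funext => x; rewrite /trunc ef; case: (x \in A) => //.
  by rewrite big1.
- apply: le_trans hr; apply: ler_sum => i _; by case: (trunc_dom mA (Efs i)).
Qed.


Hypothesis HO : order_continuous mu D E qn.

Lemma oc_small (h : T -> R[i]) (B : nat -> set T) (N : set T) :
  E h -> (forall k, measurable (B k)) -> (forall k, B k.+1 `<=` B k) ->
  measurable N -> mu N = 0%E ->
  (forall x, D x -> ~ N x -> exists k, ~ B k x \/ cabs (h x) = 0) ->
  forall eps, 0 < eps -> exists k, qn (trunc (B k) h) < eps.
Proof.
move=> Eh mB decB mN N0 hN eps e0.
have decle k n : (k <= n)%N -> B n `<=` B k.
  elim: n => [|n IH]; first by rewrite leqn0 => /eqP ->.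
  rewrite leq_eqVlt => /orP [/eqP -> //|]; rewrite ltnS => /IH.
  by move=> h1 x /decB /h1.
pose F k x := real_complex R (cabs (h x) * \1_(B k) x).
have [mre mim z] := EL0 Eh.
have LF k : L0 D (F k).
  split.
  - change (measurable_fun D ((fun x => cabs (h x)) \* (\1_(B k) : T -> R))).
    apply: measurable_funM; [exact: meas_cabs (EL0 Eh) | exact: measurable_indic].
  - exact: measurable_cst.
  - by move=> x Dx; rewrite /F z // cabs0 mul0r.
have Fle k x : 0 <= cabs (h x) * \1_(B k) x <= cabs (h x).
  by rewrite indicE; case: (x \in B k); rewrite ?mulr1 ?mulr0 ?lexx ?cabs_ge0.
have cF k x : cabs (F k x) = cabs (h x) * \1_(B k) x.
  by rewrite /F cabs_real ger0_norm //; case/andP: (Fle k x).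
have [_ cv] : (forall n, qn (F n.+1) <= qn (F n)) /\ (fun n => qn (F n)) @ \oo --> 0.
  apply: (HO h Eh F LF).
- move=> n; exists set0; split => //.
  move=> x _ _; rewrite /F /=; split => //.
  by case/andP: (Fle n x).
- exists N; split => // x Dx Nx; split.
  + move=> n; rewrite /F /= !indicE.
    case hn1 : (x \in B n.+1); case hn : (x \in B n); rewrite ?mulr1 ?mulr0 ?lexx ?cabs_ge0 //.
    by move: hn; rewrite (mem_set (decB n x (set_mem hn1))).
  + apply/cvgrPdist_le => ee ee0; have [k hk] := hN x Dx Nx.
    exists k => // n /= kn; rewrite /F /=.
    suff -> : cabs (h x) * \1_(B n) x = 0 by rewrite subr0 normr0 ltW.
    case: hk => [nB|->]; last by rewrite mul0r.
    rewrite indicE; case hn : (x \in B n); rewrite ?mulr0 //.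
    by case: nB; exact: (decle _ _ kn _ (set_mem hn)).
have EF k : E (F k) /\ qn (F k) <= qn h.
  apply: dom => // x _; rewrite cF; by case/andP: (Fle k x).
have := (cvgrPdist_lt _ _).1 cv eps e0.
move=> [K _ HK]; exists K.
have := HK K (leqnn K); rewrite /= sub0r normrN => hK.
have hd : forall x, D x -> cabs (trunc (B K) h x) <= cabs (F K x).
  move=> x _; rewrite cF /trunc indicE; case: (x \in B K); rewrite ?mulr1 ?cabs0 ?mulr0 //.
have [_ hle] := @dom (trunc (B K) h) (F K) (L0_trunc (mB K) (EL0 Eh)) (proj1 (EF K)) hd.
apply: le_lt_trans hle _; apply: le_lt_trans hK; exact: ler_norm.
Qed.


Lemma ev_small (u : nat -> \bar R) : u n @[n --> \oo] --> 0%E ->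
  forall e : R, 0 < e -> forall n0, exists m, (n0 <= m)%N /\ (u m <= e%:E)%E.
Proof.
move=> /fine_cvgP [[N1 _ H1] cv] e e0 n0.
have [N2 _ H2] := (cvgrPdist_lt _ _).1 cv e e0.
exists (maxn n0 (maxn N1 N2)); split; first exact: leq_maxl.
have h1 := H1 (maxn n0 (maxn N1 N2)) (leq_trans (leq_maxl _ _) (leq_maxr _ _)).
have h2 := H2 (maxn n0 (maxn N1 N2)) (leq_trans (leq_maxr _ _) (leq_maxr _ _)).
rewrite -(fineK h1) lee_fin; apply: ltW; move: h2; rewrite /= sub0r normrN.
exact: le_lt_trans (ler_norm _).
Qed.

Lemma trunc_sub (A B : set T) h : measurable A -> measurable B -> A `<=` B -> E h ->
  qn (trunc A h) <= qn (trunc B h).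
Proof.
move=> mA mB AB Eh.
have [EB _] := trunc_dom mB Eh.
have hd : forall x, D x -> cabs (trunc A h x) <= cabs (trunc B h x).
  move=> x _; rewrite /trunc; case hA: (x \in A); case hB: (x \in B);
    rewrite ?cabs0 ?lexx ?cabs_ge0 //.
  by move: hB; rewrite (mem_set (AB x (set_mem hA))).
exact: (proj2 (dom _ _ (L0_trunc mA (EL0 Eh)) EB hd)).
Qed.

Lemma ac_small h (A : nat -> set T) n0 : E h -> (forall m, measurable (A m)) ->
  mu (A m) @[m --> \oo] --> 0%E ->
  forall eps, 0 < eps -> exists2 m, (n0 <= m)%N & qn (trunc (A m) h) < eps.
Proof.
move=> Eh mA cv eps e0.
have /choice [m hm] : forall k, exists m, (n0 <= m)%N /\ (mu (A m) <= (1 / (2 ^ k.+1)%:R)%:E)%E.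
  by move=> k; apply: ev_small => //; rewrite divr_gt0 // ltr0n expn_gt0.
pose G := fun k => A (m k).
pose B := fun k => \bigcup_(j >= k) G j.
have mB k : measurable (B k) by apply: bigcup_measurable => j _; exact: mA.
have decB k : B k.+1 `<=` B k by move=> x [j /= kj Gj]; exists j => //=; exact: ltnW.
have mN : measurable (lim_sup_set G).
  by apply: bigcap_measurable => [|k _]; [exists 0%N|exact: mB].
have N0 : mu (lim_sup_set G) = 0%E.
  apply: lim_sup_set_cvg0; first by move=> k; exact: mA.
  apply: (@le_lt_trans _ _ 1%:E); last exact: ltey.
  apply: le_trans (epsilon_trick0 xpredT ler01).
  apply: lee_nneseries => k; [move=> _ _; exact: measure_ge0 | move=> _; exact: (proj2 (hm k))].
have hc : forall x, D x -> ~ lim_sup_set G x -> exists k, ~ B k x \/ cabs (h x) = 0.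
  move=> x _ Nx; have [k hk] : exists k, ~ B k x.
    by apply/existsNP => allB; apply: Nx => k _; exact: allB.
  by exists k; left.
have [k hk] := @oc_small h B (lim_sup_set G) Eh mB decB mN N0 hc eps e0.
exists (m k); first exact: (proj1 (hm k)).
apply: le_lt_trans hk; apply: trunc_sub => //.
by move=> x Gx; exists k => //=.
Qed.


Lemma E_add f g : E f -> E g -> E (Defs.addf f g).
Proof. by case: HQ => [[_ [_ [Hadd _]] _ _ _] _ _]; apply: Hadd. Qed.

Lemma E_scale c {f} : E f -> E (scalef c f) /\ qn (scalef c f) = cabs c * qn f.
Proof. by case: HQ => [[_ [_ [_ Hs]] _ Hqs _] _ _] Ef; split; [apply: Hs|apply: Hqs]. Qed.

Lemma E_sub {f g} : E f -> E g -> E (subf f g).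
Proof.
move=> Ef Eg; have -> : subf f g = Defs.addf f (scalef (-1) g).
  by apply/funext => x; rewrite /subf /Defs.addf /scalef mulN1r.
by apply: E_add => //; case: (E_scale (-1) Eg).
Qed.

Lemma env_ge0 f : E f -> 0 <= env_norm E qn f.
Proof.
move=> Ef; apply: lb_le_inf.
- by exists (qn f), 1%N, (fun _ => f); split => //;
    [apply/funext => x; rewrite big_ord1| rewrite big_ord1].
- move=> _ [m [gs [Egs _ ->]]]; apply: sumr_ge0 => i _; exact: qn_ge0.
Qed.

Lemma HC_gen : HC mu D E qn.
Proof.
move=> F EF cau cim.
apply/cvgrPdist_le => e e0.
pose eps := e / 5%:R.
have eps0 : 0 < eps by rewrite divr_gt0.
have [n0 hn0] := cau eps eps0.
pose h := F n0; have Eh : E h := EF n0.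
pose S k := [set x | D x /\ cabs (h x) < (k.+1%:R)^-1].
have mS k : measurable (S k) by apply: mset_lt (EL0 Eh).
have decS k : S k.+1 `<=` S k.
  move=> x [Dx hx]; split => //; apply: lt_le_trans hx _.
  by rewrite lef_pV2 ?posrE ?ltr0n // ler_nat.
have condS : forall x, D x -> ~ set0 x -> exists k, ~ S k x \/ cabs (h x) = 0.
  move=> x Dx _; have := cabs_ge0 (h x); rewrite le_eqVlt => /orP [/eqP <-|cp].
    by exists 0%N; right.
  exists (Num.Def.trunc (cabs (h x))^-1); left => -[_ hlt].
  have hgt : ((Num.Def.trunc (cabs (h x))^-1).+1%:R)^-1 < cabs (h x).
    rewrite -[X in _ < X](invrK (cabs (h x))) ltf_pV2 ?posrE ?invr_gt0 ?ltr0n //.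
    exact: truncnS_gt.
  by have := lt_trans hlt hgt; rewrite ltxx.
have [k hk] := @oc_small h S set0 Eh mS decS measurable0 (measure0 _) condS eps eps0.
pose eta := (k.+1%:R : R)^-1.
have eta0 : 0 < eta by rewrite invr_gt0 ltr0n.
have qh0 : 0 <= qn h := qn_ge0 Eh.
pose del := eps * eta / (qn h + 1).
have del0 : 0 < del by rewrite divr_gt0 ?mulr_gt0 // ltr_wpDl.
pose c := del / eta.
have c0 : 0 <= c by rewrite divr_ge0 // ltW.
have cqh : c * qn h <= eps.
  have q1 : 0 < qn h + 1 by rewrite ltr_wpDl.
  have ce : c = eps / (qn h + 1).
    by rewrite /c /del; field; rewrite (lt0r_neq0 q1) (lt0r_neq0 eta0).
  rewrite ce mulrAC ler_pdivrMr // ler_pM2l // lerDl //.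
pose A m := [set x | D x /\ del < cabs (F m x)].
have mA m : measurable (A m) by apply: mset_gt (EL0 (EF m)).
have cvA : mu (A m) @[m --> \oo] --> 0%E.
  have eqA : (fun n => mu [set x | D x /\ del < cabs (F n x - (fun=> 0) x)]) = (fun m => mu (A m)).
    by apply/funext => n; congr (mu _); apply/funext => x /=; rewrite subr0.
  by rewrite -eqA; apply: cim.
have [m n0m hm] := @ac_small h A n0 Eh mA cvA eps eps0.
have Esub := E_sub Eh (EF m).
have [r r0 dr] := env_lt Esub (hn0 n0 m (leqnn _) n0m).
pose M := ~` S k `&` ~` A m.
have mM : measurable M by apply: measurableI; apply: measurableC.
have mGA : measurable (~` S k `&` A m) by apply: measurableI => //; apply: measurableC.
have hdec : dec h (qn (trunc (S k) h) + qn (trunc (~` S k `&` A m) h) + qn (trunc M (F m)) + r).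
  have eh : h = Defs.addf (Defs.addf (Defs.addf (trunc (S k) h) (trunc (~` S k `&` A m) h))
                 (trunc M (F m))) (trunc M (subf h (F m))).
    apply/funext => x; rewrite /Defs.addf /trunc /subf.
    have eGA : (x \in ~` S k `&` A m) = ~~ (x \in S k) && (x \in A m).
      by rewrite in_setI in_setC.
    have eM : (x \in M) = ~~ (x \in S k) && ~~ (x \in A m).
      by rewrite /M in_setI !in_setC.
    rewrite eGA eM; case: (x \in S k); case: (x \in A m); rewrite /= ?addr0 ?add0r //.
    by rewrite addrC subrK.
  rewrite {1}eh.
  have d1 := dec_E _ (proj1 (trunc_dom (mS k) Eh)).
  have d2 := dec_E _ (proj1 (trunc_dom mGA Eh)).
  have d3 := dec_E _ (proj1 (trunc_dom mM (EF m))).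
  have d4 := dec_trunc _ _ _ mM dr.
  have H := dec_add _ _ _ _ (dec_add _ _ _ _ (dec_add _ _ _ _ d1 d2) d3) d4.
  exact H.
have b2 : qn (trunc (~` S k `&` A m) h) <= eps.
  by apply: ltW; apply: le_lt_trans hm; apply: trunc_sub => // x [].
have b3 : qn (trunc M (F m)) <= eps.
  have [Esc qsc] := E_scale (real_complex R c) Eh.
  have hd : forall x, D x -> cabs (trunc M (F m) x) <= cabs (scalef (real_complex R c) h x).
    move=> x Dx; rewrite /trunc /scalef cabsM cabs_real ger0_norm //.
    case hx : (x \in M); last by rewrite cabs0 mulr_ge0 ?cabs_ge0.
    move: hx; rewrite /M in_setI in_setC in_setC => /andP [/negP nS /negP nA].
    have hS : eta <= cabs (h x).
      by rewrite leNgt; apply/negP => hlt; apply: nS; apply/mem_set; split.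
    have hA : cabs (F m x) <= del.
      by rewrite leNgt; apply/negP => hlt; apply: nA; apply/mem_set; split.
    apply: (le_trans hA); rewrite /c -mulrA ler_pMr // ler_pdivlMl // mulr1 //.
  case: (dom _ _ (L0_trunc mM (EL0 (EF m))) Esc hd) => _ /le_trans; apply.
  by rewrite qsc cabs_real ger0_norm.
have e5 : 5%:R * eps = e by rewrite /eps mulrC divfK ?pnatr_eq0.
exists n0 => // N /= hN.
have [r' r'0 dr'] := env_lt (E_sub (EF N) Eh) (hn0 N n0 hN (leqnn _)).
have eN : F N = Defs.addf (subf (F N) h) h.
  by apply/funext => x; rewrite /Defs.addf /subf subrK.
have := env_le _ _ (dec_add _ _ _ _ dr' hdec); rewrite -eN => hle.
rewrite sub0r normrN ger0_norm ?env_ge0 //.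
apply: le_trans hle _.
move: e5 hk b2 b3 r0 r'0; clear; move=> e5 hk b2 b3 r0 r'0.
lra.
Qed.

End Generic.

Lemma Ico0_measurable (R : realType) (alpha : \bar R) : measurable (Ico0 alpha).
Proof.
case: alpha => [r| |].
- rewrite (_ : Ico0 r%:E = [set` `[0, r[]); first exact: measurable_itv.
  apply/seteqP; split => x /=; rewrite in_itv /= /Ico0 /=.
    by case=> -> /=; rewrite lte_fin.
  by case/andP => -> /=; rewrite lte_fin.
- rewrite (_ : Ico0 +oo%E = [set` `[0, +oo[]); first exact: measurable_itv.
  apply/seteqP; split => x /=; rewrite in_itv /= andbT /Ico0 /=; first by case.
  by move=> ->; split => //; exact: ltey.
- rewrite (_ : Ico0 -oo%E = set0) //.
  apply/seteqP; split => x //; rewrite /Ico0 /= => -[_]; by rewrite ltNge leNye.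
Qed.

Theorem mainTheorem4 (R : realType) :
  (* I = [0, alpha), 0 < alpha <= oo, with Lebesgue measure *)
  (forall alpha : \bar R, (0 < alpha)%E ->
     forall (E : set (R -> R[i])) (qn : (R -> R[i]) -> R),
       is_qsym_space (@lebesgue_measure R) (Ico0 alpha) E qn ->
       order_continuous (@lebesgue_measure R) (Ico0 alpha) E qn ->
       HC (@lebesgue_measure R) (Ico0 alpha) E qn) /\
  (* I = N with counting measure, E contained in c_0 *)
  (forall (E : set (nat -> R[i])) (qn : (nat -> R[i]) -> R),
       is_qsym_space (@counting nat R) setT E qn ->
       (forall f, E f -> (fun n => cabs (f n)) @ \oo --> 0%R) ->
       order_continuous (@counting nat R) setT E qn ->
       HC (@counting nat R) setT E qn).
Proof.
split.
- move=> alpha _ E qn HQ HO; apply: HC_gen => //; exact: Ico0_measurable.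
- by move=> E qn HQ _ HO; apply: HC_gen.
Qed.
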